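(* Let $\mathbf{f}:\mathbb{R}^D\times[0,1]\to\mathbb{R}^D$ and $g:[0,1]\to\mathbb{R}$ be sufficiently regular. Let $q_t$ and $p_t$, $t\in[0,1]$, be positive smooth probability densities on $\mathbb{R}^D$, each solving the Fokker–Planck equation $$\partial_t u=\nabla\cdot\Big(\big(\tfrac12 g(t)^2\nabla\log u-\mathbf{f}(\cdot,t)\big)u\Big)$$ of the SDE $\mathrm{d}\mathbf{z}=\mathbf{f}(\mathbf{z},t)\mathrm{d}t+g(t)\mathrm{d}\mathbf{w}$. Assume enough decay and regularity that differentiation under the integral sign and integration by parts with vanishing boundary terms are valid; for instance, $\log q_t,\log p_t$ smooth with at most polynomial growth at infinity suffices. Assume $q_1=p_1$. Then $$-\int q_0\log p_0\,d\mathbf{z}=\mathcal{H}(q_1)+\int_0^1\mathbb{E}_{\mathbf{z}\sim q_t}\Big[\tfrac12 g(t)^2\|\nabla\log p_t(\mathbf{z})\|_2^2+\mathbf{f}(\mathbf{z},t)^\top\nabla\log q_t(\mathbf{z})-g(t)^2\,\nabla\log q_t(\mathbf{z})^\top\nabla\log p_t(\mathbf{z})\Big]dt,$$ where $\mathcal{H}(q_1)=-\int q_1\log q_1$ is the differential entropy. *)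

(* Defs.v *)
From HB Require Import structures.
From mathcomp Require Import all_boot all_order all_algebra.
From mathcomp Require Import all_classical all_reals all_analysis.

Set Implicit Arguments.
Unset Strict Implicit.
Unset Printing Implicit Defensive.
Import Order.TTheory GRing.Theory Num.Def Num.Theory.
Import numFieldNormedType.Exports.

Local Open Scope classical_set_scope.
Local Open Scope ring_scope.

Section Defs.
Context {R : realType} {D : nat}.

Definition RD := 'rV[R]_D.

Definition borelRD : Type := g_sigma_algebraType (@open RD).
HB.instance Definition _ := Measurable.on borelRD.

Definition box (a b : RD) : set RD := [set z | forall i, a 0 i < z 0 i <= b 0 i].

(* mu is (Borel-)Lebesgue measure on R^D: it gives every box its volume.
   (This characterizes Lebesgue measure on the Borel sets uniquely.) *)
Definition is_lebesgue_RD (mu : {measure set borelRD -> \bar R}) : Prop :=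
  forall a b : RD, (forall i, a 0 i <= b 0 i) ->
    mu (box a b : set borelRD) = (\prod_(i < D) (b 0 i - a 0 i))%:E.

Definition partial (i : 'I_D) (h : RD -> R) (z : RD) : R :=
  'D_(delta_mx 0 i : RD) h z.
Definition grad (h : RD -> R) (z : RD) : RD := \row_i partial i h z.
Definition dotRD (u v : RD) : R := \sum_(i < D) u 0 i * v 0 i.
Definition divg (V : RD -> RD) (z : RD) : R :=
  \sum_(i < D) partial i (fun y => V y 0 i) z.

Definition dt (u : RD -> R -> R) (z : RD) (t : R) : R := derive1 (u z) t.

Definition fp_flux (f : RD -> R -> RD) (g : R -> R) (u : RD -> R -> R) (t : R)
  (z : RD) : RD :=
  u z t *: ((2^-1 * g t ^+ 2) *: grad (fun y => ln (u y t)) z - f z t).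

Definition solves_FP (f : RD -> R -> RD) (g : R -> R) (u : RD -> R -> R) : Prop :=
  forall t, t \in `]0, 1[ -> forall z, dt u z t = divg (fp_flux f g u t) z.

Definition smooth_prob_density (mu : {measure set borelRD -> \bar R})
  (u : RD -> R -> R) : Prop :=
  [/\ forall z t, 0 < u z t,
      forall t, t \in `[0, 1] ->
        mu.-integrable [set: borelRD] (fun z : borelRD => (u z t)%:E) /\
        \int[mu]_(z in [set: borelRD]) u z t = 1,
      forall t, t \in `[0, 1] -> forall z, differentiable (u ^~ t) z /\
        forall i, differentiable (partial i (u ^~ t)) z
    & forall t, t \in `]0, 1[ -> forall z, derivable (u z) t 1].

Definition ibp_valid (mu : {measure set borelRD -> \bar R}) (i : 'I_D)
  (v w : RD -> R) : Prop :=
  [/\ mu.-integrable [set: borelRD] (fun z : borelRD => (partial i v z * w z)%:E),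
      mu.-integrable [set: borelRD] (fun z : borelRD => (v z * partial i w z)%:E)
    & \int[mu]_(z in [set: borelRD]) (partial i v z * w z)
      = - \int[mu]_(z in [set: borelRD]) (v z * partial i w z)].

(* Differentiation under the integral sign is valid for H : R^D x R -> R on
   [0,1]:  F(t) := int H(z,t) dz  is defined and continuous on [0,1],
   differentiable on ]0,1[ with  F'(t) = int d_t H(z,t) dz,  and this
   derivative extends continuously to [0,1] (regularity in t). *)
Definition dui_valid (mu : {measure set borelRD -> \bar R})
  (H : RD -> R -> R) : Prop :=
  let F := fun t => \int[mu]_(z in [set: borelRD]) H z t in
  [/\ forall t, t \in `[0, 1] ->
        mu.-integrable [set: borelRD] (fun z : borelRD => (H z t)%:E),
      {within `[0, 1], continuous F},
      forall t, t \in `]0, 1[ ->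
        [/\ mu.-integrable [set: borelRD] (fun z : borelRD => (dt H z t)%:E),
            derivable F t 1
          & derive1 F t = \int[mu]_(z in [set: borelRD]) dt H z t]
    & exists Phi : R -> R, {within `[0, 1], continuous Phi} /\
        forall t, t \in `]0, 1[ -> Phi t = \int[mu]_(z in [set: borelRD]) dt H z t].

Definition expect (mu : {measure set borelRD -> \bar R}) (u : RD -> R -> R)
  (t : R) (phi : RD -> R) : R :=
  \int[mu]_(z in [set: borelRD]) (u z t * phi z).

Definition entropy (mu : {measure set borelRD -> \bar R}) (u : RD -> R) : R :=
  - \int[mu]_(z in [set: borelRD]) (u z * ln (u z)).

End Defs.

Definition sqnorm2 {R : realType} {D : nat} (v : @RD R D) : R := dotRD v v.

(* Main.v *)
Require Import Defs.
From HB Require Import structures.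
From mathcomp Require Import all_boot all_order all_algebra.
From mathcomp Require Import all_classical all_reals all_analysis.
From mathcomp Require Import measurable_realfun.
From mathcomp Require Import ring lra.
Import Order.TTheory GRing.Theory Num.Def Num.Theory.
Import numFieldNormedType.Exports.
Local Open Scope classical_set_scope.
Local Open Scope ring_scope.



Section H.
Context {R : realType} {D : nat}.

Lemma dln_apply (x w : R) : 0 < x -> 'd (@ln R) x w = w / x.
Proof.
move=> x0.
have dl : differentiable (@ln R) x by apply/derivable1_diffP; apply: ex_derive; exact: is_derive1_ln.
rewrite -[w]mulr1 -[w * 1]/(w *: (1:R)) linearZ /= -derive1E' //.
rewrite derive1E; have [_ ->] := is_derive1_ln x0.
by rewrite /GRing.scale /= mulr1.
Qed.

Lemma partial_ln (h : @RD R D -> R) i z : differentiable h z -> 0 < h z ->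
  partial i (fun y => ln (h y)) z = partial i h z / h z.
Proof.
move=> dh h0.
have dl : differentiable (@ln R) (h z) by apply/derivable1_diffP; apply: ex_derive; exact: is_derive1_ln.
rewrite /partial (_ : (fun y => ln (h y)) = (@ln R) \o h) //.
rewrite deriveE; last exact: differentiable_comp.
by rewrite diff_comp //= dln_apply // -deriveE.
Qed.

Lemma partial_div (h k : @RD R D -> R) i z : differentiable h z -> differentiable k z -> k z != 0 ->
  partial i (fun y => h y / k y) z = (partial i h z * k z - h z * partial i k z) / (k z ^+ 2).
Proof.
move=> dh dk k0.
have dh' := @diff_derivable _ _ _ h z (delta_mx 0 i : RD) dh.
have dk' := @diff_derivable _ _ _ k z (delta_mx 0 i : RD) dk.
rewrite /partial (_ : (fun y => h y / k y) = h * (fun y => (k y)^-1)) //.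
rewrite deriveM //; last exact: derivableV.
rewrite deriveV //. rewrite /GRing.scale /=. move: k0 (h z) ('D_ _ h z) ('D_ _ k z); move: (k z) => b b0 a c d; field; exact: b0.
Qed.

End H.





Section H2. Context {R : realType} {D : nat}.
Lemma dt_qlnp (q p : @RD R D -> R -> R) z t : derivable (q z) t 1 -> derivable (p z) t 1 -> 0 < p z t ->
  dt (fun z t => q z t * ln (p z t)) z t = dt q z t * ln (p z t) + q z t * (dt p z t / p z t).
Proof.
move=> dq dp p0.
have dl : differentiable (@ln R) (p z t) by apply/derivable1_diffP; apply: ex_derive; exact: is_derive1_ln.
have dlp : derivable (@ln R \o p z) t 1.
  by apply/derivable1_diffP; apply: differentiable_comp => //; apply/derivable1_diffP.
rewrite /dt derive1E (_ : (fun s => q z s * ln (p z s)) = q z * (@ln R \o p z)) //.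
have L : ((@ln R)^`())%classic (p z t) = (p z t)^-1 by rewrite derive1E; exact: (@derive_val _ _ _ _ _ _ _ (is_derive1_ln p0)).
rewrite (@deriveM R _ (q z) (@ln R \o p z) t 1 dq dlp).
rewrite -!derive1E.
have C : ((@ln R \o p z)^`())%classic t = ((@ln R)^`())%classic (p z t) * ((p z)^`())%classic t.
  exact: (@derive1_comp R (p z) (@ln R) t dp (proj2 (derivable1_diffP _ _) dl)).
rewrite C.
rewrite L. (rewrite /comp /GRing.scale /=). ring.
Qed.

End H2.



Section H3.
Context {R : realType}.
Notation leb := (@lebesgue_measure R).

Lemma int01_oo (g : R -> R) : measurable_fun (`[0, 1] : set R) g ->
  (\int[leb]_(t in (`[0%R, 1%R] : set R)) (g t)%:E = \int[leb]_(t in (`]0%R, 1%R[ : set R)) (g t)%:E)%E.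
Proof.
move=> mg.
rewrite -integral_itv_bndo_bndc; last first.
  by apply/measurable_EFinP; apply: measurable_funS mg => //; apply: subset_itvl; rewrite bnd_simp.
rewrite -integral_itv_obnd_cbnd //.
by apply/measurable_EFinP; apply: measurable_funS mg => //; apply: subset_itv; rewrite bnd_simp.
Qed.

Lemma set01 : (`[0, 1]%classic : set R) = `]0, 1[%classic `|` ([set 0] `|` [set 1]).
Proof.
apply/seteqP; split => x /=; rewrite !in_itv /=.
  move=> /andP[]; rewrite !le_eqVlt => /predU1P[<-|x0] /predU1P[->|x1]; by [right; left|right; right|right;left|left; rewrite x0 x1].
by move=> [/andP[/ltW -> /ltW ->]|[->|->]] //; rewrite ?ler01 ?lexx.
Qed.

Lemma meas01 (g f : R -> R) : measurable_fun (`[0, 1] : set R) f ->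
  (forall t, t \in `]0, 1[ -> g t = f t) -> measurable_fun (`[0, 1] : set R) g.
Proof.
move=> mf gf; rewrite set01.
have mU : measurable ([set (0:R)] `|` [set 1]) by apply: measurableU; exact: measurable_set1.
apply: (proj2 (@measurable_funU _ _ _ _ _ _ g (measurable_itv `]0, 1[) mU)).
split.
  apply: (@eq_measurable_fun _ _ _ _ _ f g); first by move=> t; rewrite inE /= => tI; rewrite gf. 
  by apply: measurable_funS mf => //; apply: subset_itv; rewrite bnd_simp.
apply: (proj2 (@measurable_funU _ _ _ _ _ _ g (measurable_set1 0) (measurable_set1 1))); split; exact: measurable_fun_set1.
Qed.

Lemma Rint01 (g f : R -> R) : {within `[0, 1], continuous f} ->
  (forall t, t \in `]0, 1[ -> g t = f t) ->
  \int[leb]_(t in `[0, 1]) g t = \int[leb]_(t in `[0, 1]) f t.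
Proof.
move=> cf gf.
have If : leb.-integrable `[0, 1] (EFin \o f).
  by apply: continuous_compact_integrable => //; exact: segment_compact.
have mf : measurable_fun (`[0, 1] : set R) f by apply/measurable_EFinP; exact: (measurable_int _ If).
have mg := meas01 _ _ mf gf.
rewrite /Rintegral int01_oo // int01_oo //; congr fine.
by apply: eq_integral => t; rewrite inE /= => tI; rewrite gf.
Qed.
End H3.



Section H4.
Context {R : realType}.
Notation leb := (@lebesgue_measure R).

Lemma ftc01 (F Phi : R -> R) : {within `[0, 1], continuous F} -> {within `[0, 1], continuous Phi} ->
  (forall t, t \in `]0, 1[ -> derivable F t 1 /\ derive1 F t = Phi t) ->
  \int[leb]_(t in `[0, 1]) Phi t = F 1 - F 0.
Proof.
move=> cF cP dF.
have [_ F0 F1] := (continuous_within_itvP F (@ltr01 R)).1 cF.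
rewrite /Rintegral (@continuous_FTC2 R Phi F 0 1 ltr01 cP) //.
  by split => // t /dF [].
by move=> t /dF [].
Qed.

Context {D : nat}.
Lemma Rint_sum (mu : {measure set (@borelRD R D) -> \bar R}) (I : Type) (s : seq I) (h : I -> borelRD -> R) :
  (forall i, mu.-integrable [set: borelRD] (fun z => (h i z)%:E)) ->
  mu.-integrable [set: borelRD] (fun z => (\sum_(i <- s) h i z)%:E) /\
  \int[mu]_(z in [set: borelRD]) (\sum_(i <- s) h i z) = \sum_(i <- s) \int[mu]_(z in [set: borelRD]) h i z.
Proof.
move=> Ih; elim: s => [|a s [IH1 IH2]].
  rewrite big_nil (_ : (fun z => \sum_(i <- [::]) h i z) = fun=> 0); last by apply/funext => z; rewrite big_nil.
  split.
    apply: (@eq_integrable _ _ _ mu setT measurableT (cst 0%E)) => [z _|]; [by rewrite big_nil | exact: integrable0].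
  by rewrite Rintegral_cst // mul0r.
rewrite big_cons (_ : (fun z => \sum_(i <- a :: s) h i z) = fun z => h a z + \sum_(i <- s) h i z); last by apply/funext => z; rewrite big_cons.
split.
  rewrite (_ : (fun z => (\sum_(i <- a :: s) h i z)%:E) = (fun z => (h a z)%:E) \+ (fun z => (\sum_(i <- s) h i z)%:E))%E; last by apply/funext => z; rewrite big_cons.
  exact: (integrableD measurableT (Ih a) IH1).
rewrite RintegralD //; last exact: Ih a.
by rewrite -IH2.
Qed.
End H4.



Section H5.
Context {R : realType} {D : nat}.

Lemma lin2 (mu : {measure set (@borelRD R D) -> \bar R}) (a b : R) (u v : borelRD -> R) :
  mu.-integrable [set: borelRD] (fun z => (u z)%:E) ->
  mu.-integrable [set: borelRD] (fun z => (v z)%:E) ->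
  mu.-integrable [set: borelRD] (fun z => (a * u z + b * v z)%:E) /\
  \int[mu]_(z in [set: borelRD]) (a * u z + b * v z) =
    a * \int[mu]_(z in [set: borelRD]) u z + b * \int[mu]_(z in [set: borelRD]) v z.
Proof.
move=> iu iv.
have iau : mu.-integrable [set: borelRD] (fun z => (a * u z)%:E).
  by apply: (@eq_integrable _ _ _ mu setT measurableT (fun x => a%:E * (u x)%:E)%E) => [z _//|]; exact: integrableZl.
have ibv : mu.-integrable [set: borelRD] (fun z => (b * v z)%:E).
  by apply: (@eq_integrable _ _ _ mu setT measurableT (fun x => b%:E * (v x)%:E)%E) => [z _//|]; exact: integrableZl.
split.
  by apply: (@eq_integrable _ _ _ mu setT measurableT ((fun z => (a * u z)%:E) \+ (fun z => (b * v z)%:E))%E) => [z _//|]; exact: integrableD.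
rewrite RintegralD //.
by rewrite RintegralZl // RintegralZl.
Qed.
End H5.



Section H6.
Context {R : realType} {D : nat}.

Lemma pw (f : @RD R D -> R -> RD) (g : R -> R) (q p : RD -> R -> R) t z :
  differentiable (q ^~ t) z -> differentiable (p ^~ t) z -> 0 < q z t -> 0 < p z t ->
  q z t * (2^-1 * g t ^+ 2 * sqnorm2 (grad (fun y => ln (p y t)) z)
          + dotRD (f z t) (grad (fun y => ln (q y t)) z)
          - g t ^+ 2 * dotRD (grad (fun y => ln (q y t)) z)
                             (grad (fun y => ln (p y t)) z))
  = \sum_(i < D) ((-1) * (fp_flux f g q t z 0 i * partial i (fun y => ln (p y t)) z)
                 + (-1) * (fp_flux f g p t z 0 i * partial i (fun y => q y t / p y t) z)).
Proof.
move=> dq dp q0 p0.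
rewrite /sqnorm2 /dotRD.
set a := fun i : 'I_D => grad (fun y => ln (p y t)) z 0 i.
set b := fun i : 'I_D => grad (fun y => ln (q y t)) z 0 i.
transitivity (\sum_(i < D) q z t * (2^-1 * g t ^+ 2 * (a i * a i) + f z t 0 i * b i - g t ^+ 2 * (b i * a i))).
  by rewrite -mulr_sumr sumrB big_split /= -!mulr_sumr.
apply: eq_bigr => i _; rewrite /a /b.
rewrite /fp_flux /grad !mxE.
rewrite (partial_div _ _ i z dq dp (lt0r_neq0 p0)).
rewrite (partial_ln _ i z dq q0) (partial_ln _ i z dp p0).
move: (lt0r_neq0 q0) (lt0r_neq0 p0).
move: (partial i (fun y => q y t) z) (partial i (fun y => p y t) z) (f z t 0 i) (g t) (q z t) (p z t).
move=> a1 b1 c d e h e0 h0.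
by field; rewrite h0 e0.
Qed.
End H6.



Section H7.
Context {R : realType} {D : nat}.

Lemma pwdt (f : @RD R D -> R -> RD) (g : R -> R) (q p : RD -> R -> R) t z :
  derivable (q z) t 1 -> derivable (p z) t 1 -> 0 < p z t ->
  dt q z t = divg (fp_flux f g q t) z -> dt p z t = divg (fp_flux f g p t) z ->
  dt (fun z t => q z t * ln (p z t)) z t =
  \sum_(i < D) (1 * (partial i (fun y => fp_flux f g q t y 0 i) z * ln (p z t))
              + 1 * (partial i (fun y => fp_flux f g p t y 0 i) z * (q z t / p z t))).
Proof.
move=> dq dp p0 hq hp.
rewrite (dt_qlnp _ _ _ _ dq dp p0).
rewrite hq hp /divg.
rewrite big_split /=.
set A := fun i : 'I_D => partial i (fun y : RD => fp_flux f g q t y 0 i) z.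
set B := fun i : 'I_D => partial i (fun y : RD => fp_flux f g p t y 0 i) z.
set L := ln (p z t).
have E1 : (\sum_(i < D) A i) * L = \sum_(i < D) 1 * (A i * L).
  by rewrite mulr_suml; apply: eq_bigr => i _; rewrite mul1r.
have E2 : q z t * ((\sum_(i < D) B i) / p z t) = \sum_(i < D) 1 * (B i * (q z t / p z t)).
  rewrite mulr_suml mulr_sumr; apply: eq_bigr => i _.
  by rewrite mul1r mulrCA mulrA.
exact: (f_equal2 _ E1 E2).
Qed.
End H7.



Section H8.
Context {R : realType} {D : nat}.

Lemma core (mu : {measure set (@borelRD R D) -> \bar R})
  (f : @RD R D -> R -> RD) (g : R -> R) (q p : RD -> R -> R) t :
  (forall z, 0 < q z t) -> (forall z, 0 < p z t) ->
  (forall z, differentiable (q ^~ t) z) -> (forall z, differentiable (p ^~ t) z) ->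
  (forall z, derivable (q z) t 1) -> (forall z, derivable (p z) t 1) ->
  (forall z, dt q z t = divg (fp_flux f g q t) z) ->
  (forall z, dt p z t = divg (fp_flux f g p t) z) ->
  (forall i, ibp_valid mu i (fun z => fp_flux f g q t z 0 i) (fun z => ln (p z t)) /\
     ibp_valid mu i (fun z => fp_flux f g p t z 0 i) (fun z => q z t / p z t)) ->
  expect mu q t (fun z =>
            2^-1 * g t ^+ 2 * sqnorm2 (grad (fun y => ln (p y t)) z)
          + dotRD (f z t) (grad (fun y => ln (q y t)) z)
          - g t ^+ 2 * dotRD (grad (fun y => ln (q y t)) z)
                             (grad (fun y => ln (p y t)) z))
  = \int[mu]_(z in [set: borelRD]) dt (fun z t => q z t * ln (p z t)) z t.
Proof.
move=> q0 p0 dq dp dtq dtp fq fp IB.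
set A := fun (i : 'I_D) z => partial i (fun y : RD => fp_flux f g q t y 0 i) z * ln (p z t).
set B := fun (i : 'I_D) z => partial i (fun y : RD => fp_flux f g p t y 0 i) z * (q z t / p z t).
set C := fun (i : 'I_D) z => fp_flux f g q t z 0 i * partial i (fun y => ln (p y t)) z.
set E := fun (i : 'I_D) z => fp_flux f g p t z 0 i * partial i (fun y => q y t / p y t) z.
have iA i : mu.-integrable [set: borelRD] (fun z => (A i z)%:E) by case: (IB i) => [[]].
have iB i : mu.-integrable [set: borelRD] (fun z => (B i z)%:E) by case: (IB i) => _ [].
have iC i : mu.-integrable [set: borelRD] (fun z => (C i z)%:E) by case: (IB i) => [[]].
have iE i : mu.-integrable [set: borelRD] (fun z => (E i z)%:E) by case: (IB i) => _ [].
have eA i : \int[mu]_(z in [set: borelRD]) A i z = - \int[mu]_(z in [set: borelRD]) C i z by case: (IB i) => [[]].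
have eB i : \int[mu]_(z in [set: borelRD]) B i z = - \int[mu]_(z in [set: borelRD]) E i z by case: (IB i) => _ [].
rewrite /expect.
transitivity (\int[mu]_(z in [set: borelRD]) \sum_(i < D) ((-1) * C i z + (-1) * E i z)).
  by apply: eq_Rintegral => z _; exact: pw.
transitivity (\int[mu]_(z in [set: borelRD]) \sum_(i < D) (1 * A i z + 1 * B i z)); last first.
  by apply: eq_Rintegral => z _; apply/esym; exact: (pwdt f g q p t z (dtq z) (dtp z) (p0 z) (fq z) (fp z)).
rewrite (Rint_sum mu _ _ (fun i z => (-1) * C i z + (-1) * E i z) (fun i => (lin2 _ _ _ _ _ (iC i) (iE i)).1)).2.
rewrite (Rint_sum mu _ _ (fun i z => 1 * A i z + 1 * B i z) (fun i => (lin2 _ _ _ _ _ (iA i) (iB i)).1)).2.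
apply: eq_bigr => i _.
rewrite (lin2 _ _ _ _ _ (iC i) (iE i)).2 (lin2 _ _ _ _ _ (iA i) (iB i)).2 eA eB.
by rewrite !mulN1r !mul1r.
Qed.
End H8.



Theorem mainTheorem2 (R : realType) (D : nat)
  (mu : {measure set (@borelRD R D) -> \bar R})
  (f : @RD R D -> R -> @RD R D) (g : R -> R) (q p : @RD R D -> R -> R) :
  is_lebesgue_RD mu ->
  (forall t z, differentiable (f ^~ t) z) ->
  smooth_prob_density mu q ->
  smooth_prob_density mu p ->
  solves_FP f g q ->
  solves_FP f g p ->
  (forall t, t \in `]0, 1[ -> forall i,
     ibp_valid mu i (fun z => fp_flux f g q t z 0 i) (fun z => ln (p z t)) /\
     ibp_valid mu i (fun z => fp_flux f g p t z 0 i) (fun z => q z t / p z t)) ->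
  dui_valid mu (fun z t => q z t * ln (p z t)) ->
  (forall z, q z 1 = p z 1) ->
  - (\int[mu]_(z in [set: borelRD]) (q z 0 * ln (p z 0)))
  = entropy mu (q ^~ 1)
    + \int[@lebesgue_measure R]_(t in `[0, 1])
        expect mu q t (fun z =>
            2^-1 * g t ^+ 2 * sqnorm2 (grad (fun y => ln (p y t)) z)
          + dotRD (f z t) (grad (fun y => ln (q y t)) z)
          - g t ^+ 2 * dotRD (grad (fun y => ln (q y t)) z)
                             (grad (fun y => ln (p y t)) z)).
Proof.
move=> _ _ [q0 _ qd qdt] [p0 _ pd pdt] FPq FPp IBP [_ Fcont Fder [Phi [Phic PhiE]]] q1p1.
set F := fun t => \int[mu]_(z in [set: borelRD]) (q z t * ln (p z t)).
have occ (s : R) : s \in `]0, 1[ -> s \in `[0, 1].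
  by rewrite !in_itv /= => /andP[/ltW -> /ltW ->].
have key t : t \in `]0, 1[ -> expect mu q t (fun z =>
            2^-1 * g t ^+ 2 * sqnorm2 (grad (fun y => ln (p y t)) z)
          + dotRD (f z t) (grad (fun y => ln (q y t)) z)
          - g t ^+ 2 * dotRD (grad (fun y => ln (q y t)) z)
                             (grad (fun y => ln (p y t)) z)) = Phi t.
  move=> tI; rewrite PhiE //.
  apply: core.
  - by move=> z; exact: q0.
  - by move=> z; exact: p0.
  - by move=> z; exact: (qd t (occ t tI) z).1.
  - by move=> z; exact: (pd t (occ t tI) z).1.
  - by move=> z; exact: qdt.
  - by move=> z; exact: pdt.
  - exact: FPq.
  - exact: FPp.
  - exact: IBP.
rewrite (Rint01 _ _ Phic key).
have dF t : t \in `]0, 1[ -> derivable F t 1 /\ derive1 F t = Phi t.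
  by move=> tI; have [_ ? ->] := Fder t tI; rewrite PhiE.
rewrite (ftc01 F Phi Fcont Phic dF).
have ent : entropy mu (q ^~ 1) = - F 1.
  rewrite /entropy /F; congr (- _).
  by apply: eq_Rintegral => z _ /=; rewrite q1p1.
by rewrite ent addKr.
Qed.
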